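(* Fix parameters $1\ge p_1\ge p_2\ge\cdots\ge p_r>0$. If $Z_{p_{i+1},p_i}$, $i=1,\dots,r-1$, are independent random variables with the indicated zero-inflated geometric distributions, then \[ \sum_{i=1}^{r-1}Z_{p_{i+1},p_i}\ \stackrel{d}{=}\ Z_{p_r,p_1}. \]
   Context: ${\rm Geom}(q)$ is the geometric distribution on $\{1,2,\dots\}$ with $\Pr(G=j)=(1-q)^{j-1}q$. For $0\le q\le p\le 1$, the zero-inflated geometric random variable is $Z_{q,p}:=B\cdot G$ where $B\sim{\rm Bernoulli}(1-q/p)$ and $G\sim{\rm Geom}(q)$ are independent. $\stackrel{d}{=}$ denotes equality in distribution. *)

(* Defs.v *)
From HB Require Import structures.
From mathcomp Require Import all_boot all_order all_algebra.
From mathcomp Require Import all_classical all_reals all_analysis.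
Set Implicit Arguments. Unset Strict Implicit. Unset Printing Implicit Defensive.
Import Order.TTheory GRing.Theory Num.Theory.
Local Open Scope classical_set_scope.
Local Open Scope ring_scope.

(* Probability mass function of the zero-inflated geometric law Z_{q,p} = B * G,
   B ~ Bernoulli(1 - q/p), G ~ Geom(q) on {1,2,...}, B and G independent:
   P(Z = 0) = q/p,  P(Z = j) = (1 - q/p) (1-q)^(j-1) q  for j >= 1. *)
Definition zig_pmf (R : realType) (q p : R) (j : nat) : R :=
  if j is j'.+1 then (1 - q / p) * ((1 - q) ^+ j' * q) else q / p.

Definition nat_rv (d : measure_display) (T : measurableType d) (X : T -> nat) :=
  forall k : nat, measurable (X @^-1` [set k]).

Definition has_zig_law (d : measure_display) (T : measurableType d) (R : realType)
  (P : probability T R) (X : T -> nat) (q p : R) :=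
  forall k : nat, P (X @^-1` [set k]) = (zig_pmf q p k)%:E.

(* Mutual independence of the discrete random variables X i, i \in I:
   for every finite subfamily J of distinct indices of I and every choice of
   values k i, the joint probability factorizes (for discrete random variables
   this is the usual definition of independence of the generated sigma-algebras). *)
Definition mutually_independent_nat (d : measure_display) (T : measurableType d)
  (R : realType) (P : probability T R) (I : seq nat) (X : nat -> T -> nat) :=
  forall J : seq nat, {subset J <= I} -> uniq J -> forall k : nat -> nat,
    P [set t | forall i, i \in J -> X i t = k i]
    = \big[mule/1%E]_(i <- J) P (X i @^-1` [set k i]).

(* Main.v *)
Require Import Defs.
From HB Require Import structures.
From mathcomp Require Import all_boot all_order all_algebra.
From mathcomp Require Import all_classical all_reals all_analysis.
From mathcomp Require Import ring lra zify.
Import Order.TTheory GRing.Theory Num.Theory.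
Local Open Scope classical_set_scope.
Local Open Scope ring_scope.

Lemma zig_conv (R : realType) (a b c : R) (n : nat) : a != 0 -> c != 0 ->
  \sum_(j < n.+1) zig_pmf a c (n - j) * zig_pmf b a j = zig_pmf b c n.
Proof.
move=> a0 c0; case: n => [|N].
  rewrite big_ord_recr big_ord0 /= add0r; field; by apply/andP.
rewrite big_ord_recr big_ord_recl /= subnn.
have E : forall i : 'I_N, zig_pmf a c (N.+1 - bump 0 i)%N *
     ((1 - b / a) * ((1 - b) ^+ (0 + i) * b))
  = ((1 - a/c) * a * (1 - b/a) * b) * ((1-a) ^+ (N.-1 - i) * (1-b) ^+ i).
  move=> i /=; rewrite /bump /= add1n subSS add0n.
  have -> : (N - i = (N.-1 - i).+1)%N by case: i => i /= Hi; lia.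
  rewrite /=; ring.
rewrite (eq_bigr _ (fun i _ => E i)) -mulr_sumr.
set s := \sum_(i < N) _.
have H := subrXX (1 - a) (1 - b) N; rewrite -/s in H.
have -> : (1 - a) ^+ N = (1 - b) ^+ N + (1 - a - (1 - b)) * s by rewrite -H; ring.
rewrite /=; field; by apply/andP.
Qed.

Theorem mainTheorem3 (R : realType) (r : nat) (p : nat -> R)
  (d : measure_display) (T : measurableType d) (P : probability T R)
  (Z : nat -> T -> nat) :
  (1 <= r)%N ->
  p 1%N <= 1 ->
  (forall i : nat, (1 <= i < r)%N -> p i.+1 <= p i) ->
  0 < p r ->
  (forall i : nat, (1 <= i < r)%N -> nat_rv (Z i)) ->
  (forall i : nat, (1 <= i < r)%N -> has_zig_law P (Z i) (p i.+1) (p i)) ->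
  mutually_independent_nat P (index_iota 1 r) Z ->
  has_zig_law P (fun t => (\sum_(1 <= i < r) Z i t)%N) (p r) (p 1%N).
Proof.
move=> r1 p1le pdec pr0 Zm Zlaw Zind.
pose S := fun m t => (\sum_(1 <= i < m) Z i t)%N.
pose Ev (J : seq nat) (k : nat -> nat) := [set t | forall i, i \in J -> Z i t = k i].
have pge : forall dd, (dd <= r.-1)%N -> p r <= p (r - dd)%N.
  elim=> [|dd IH] hd; first by rewrite subn0.
  apply: (le_trans (IH (ltnW hd))).
  have -> : (r - dd = (r - dd.+1).+1)%N by lia.
  apply: pdec; apply/andP; lia.
have ppos : forall i, (1 <= i <= r)%N -> 0 < p i.
  move=> i /andP[i1 ir]; have := pge (r - i)%N ltac:(lia).
  have -> : (r - (r - i) = i)%N by lia.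
  by move=> h; apply: (lt_le_trans pr0 h).
have S01 : forall m t, (m <= 1)%N -> S m t = 0%N.
  by move=> m t hm; rewrite /S big_geq.
have Sm : forall m t, (1 <= m)%N -> S m.+1 t = (S m t + Z m t)%N.
  by move=> m t hm; rewrite /S big_nat_recr.
have decomp : forall m n (A : set T), (1 <= m)%N ->
    S m.+1 @^-1` [set n] `&` A =
    \big[setU/set0]_(j < n.+1)
       (S m @^-1` [set (n - j)%N] `&` (Z m @^-1` [set (j : nat)] `&` A)).
  move=> m n A m1; rewrite -(bigcup_mkord n.+1 (fun j : nat => S m @^-1` [set (n - j)%N] `&` (Z m @^-1` [set j] `&` A))); apply/seteqP; split=> t /=.
    move=> [Hn At]; exists (Z m t) => /=.
      by move: Hn; rewrite Sm //; lia.
    split; last by split.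
    by move: Hn; rewrite Sm //; lia.
  move=> [j /= jn [Hs [Hz At]]]; split=> //.
  by rewrite Sm // Hz Hs; lia.
have mZ : forall i j, (1 <= i < r)%N -> measurable (Z i @^-1` [set j]).
  by move=> i j hi; apply: Zm.
have mEv : forall J k, {subset J <= index_iota 1 r} -> measurable (Ev J k).
  elim=> [|i J IH] k sub.
    have -> : Ev [::] k = setT by apply/seteqP; split=> t //=.
    exact: measurableT.
  have -> : Ev (i :: J) k = Z i @^-1` [set k i] `&` Ev J k.
    apply/seteqP; split=> t /=.
      move=> H; split; first by apply: H; rewrite inE eqxx.
      by move=> i' hi'; apply: H; rewrite inE hi' orbT.
    move=> [H1 H2] i'; rewrite inE => /orP[/eqP->//|]; exact: H2.
  apply: measurableI; last by apply: IH => x hx; apply: sub; rewrite inE hx orbT.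
  apply: mZ; have := sub i; rewrite inE eqxx mem_index_iota => /(_ isT); lia.
have mS : forall m, (m <= r)%N -> forall n, measurable (S m @^-1` [set n]).
  elim=> [|m IH] mr n.
    have [->|n0] := eqVneq n 0%N.
      have -> : S 0%N @^-1` [set 0%N] = setT.
        by apply/seteqP; split=> t //= _; rewrite S01.
      exact: measurableT.
    have -> : S 0%N @^-1` [set n] = set0.
      by apply/seteqP; split=> t //=; rewrite S01 // => /esym/eqP; rewrite (negPf n0).
    exact: measurable0.
  case: (posnP m) => [m0|mpos].
    subst m; have [->|n0] := eqVneq n 0%N.
      have -> : S 1%N @^-1` [set 0%N] = setT.
        by apply/seteqP; split=> t //= _; rewrite S01.
      exact: measurableT.
    have -> : S 1%N @^-1` [set n] = set0.
      by apply/seteqP; split=> t //=; rewrite S01 // => /esym/eqP; rewrite (negPf n0).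
    exact: measurable0.
  rewrite -[_ @^-1` _]setIT decomp //.
  apply: bigsetU_measurable => j _; apply: measurableI; first by apply: IH; lia.
  by rewrite setIT; apply: mZ; apply/andP; lia.
have indep : forall J k, {subset J <= index_iota 1 r} -> uniq J ->
    P (Ev J k) = (\prod_(i <- J) zig_pmf (p i.+1) (p i) (k i))%:E.
  move=> J k sub u; rewrite /Ev Zind // -prodEFin; apply: eq_big_seq => i iJ.
  rewrite Zlaw //; have := sub i iJ; rewrite mem_index_iota; lia.
have claim : forall m, (1 <= m <= r)%N -> forall J, {subset J <= index_iota m r} ->
    uniq J -> forall k n, P (S m @^-1` [set n] `&` Ev J k) =
    (zig_pmf (p m) (p 1%N) n * \prod_(i <- J) zig_pmf (p i.+1) (p i) (k i))%:E.
  elim=> [//|m IH] /andP[_ mr] J sub u k n.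
  have subJ1 : {subset J <= index_iota 1 r}.
    by move=> i /sub; rewrite !mem_index_iota; lia.
  have p10 : p 1%N != 0 by rewrite gt_eqF // ppos //; apply/andP; lia.
  case: (posnP m) => [m0|mpos].
    subst m; case: n => [|n].
      have -> : S 1%N @^-1` [set 0%N] = setT.
        by apply/seteqP; split=> t //= _; rewrite S01.
      by rewrite setTI indep //= divff // mul1r.
    have -> : S 1%N @^-1` [set n.+1] = set0.
      by apply/seteqP; split=> t //=; rewrite S01.
    by rewrite set0I measure0 /= divff // subrr !mul0r.
  have hJm : forall i, i \in J -> (i == m) = false.
    by move=> i /sub; rewrite mem_index_iota => h; apply/negbTE; lia.
  pose F := fun j : nat => S m @^-1` [set (n - j)%N] `&` (Z m @^-1` [set j] `&` Ev J k).
  have mF : forall j, measurable (F j).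
    move=> j; apply: measurableI; first by apply: mS; lia.
    apply: measurableI; first by apply: mZ; apply/andP; lia.
    exact: mEv.
  rewrite decomp // (@measure_semi_additive _ _ _ P F n.+1) //; first last.
  - exact: bigsetU_measurable.
  - move=> i j _ _ [t [[_ [Hi _]] [_ [Hj _]]]]; by rewrite -Hi -Hj.
  rewrite (eq_bigr (fun i : 'I_n.+1 => (zig_pmf (p m) (p 1%N) (n - i) *
      zig_pmf (p m.+1) (p m) i * \prod_(i <- J) zig_pmf (p i.+1) (p i) (k i))%:E)).
    rewrite sumEFin -mulr_suml zig_conv //; first by rewrite gt_eqF // ppos //; apply/andP; lia.
  move=> j _; rewrite /F.
  have -> : Z m @^-1` [set (j:nat)] `&` Ev J k =
      Ev (m :: J) (fun i => if i == m then (j:nat) else k i).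
    apply/seteqP; split=> t /=.
      move=> [Hz HJ] i; rewrite inE => /orP[/eqP->|iJ]; first by rewrite eqxx.
      by rewrite hJm //; apply: HJ.
    move=> H; split; first by have := H m; rewrite inE !eqxx => ->.
    by move=> i iJ; have := H i; rewrite inE iJ orbT hJm // => ->.
  have hm : (0 < m <= r)%N by apply/andP; lia.
  have hs : {subset m :: J <= index_iota m r}.
    by move=> i; rewrite inE => /orP[/eqP->|/sub]; rewrite !mem_index_iota; lia.
  have hu : uniq (m :: J).
    rewrite /= u andbT; apply/negP => /hJm; by rewrite eqxx.
  have := IH hm (m :: J) hs hu (fun i => if i == m then (j:nat) else k i) (n - j)%N.
  move=> H; etransitivity; first exact: H.
  rewrite big_cons eqxx mulrA; congr ((_ * _ * _)%:E).
  by apply: eq_big_seq => i iJ; rewrite hJm.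
move=> n.
have := claim r ltac:(apply/andP; lia) [::] ltac:(by []) isT (fun _ => 0%N) n.
have -> : Ev [::] (fun _ => 0%N) = setT by apply/seteqP; split=> t //=.
by rewrite setIT big_nil mulr1.
Qed.
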